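(* Let $\sigma_0$ be a strictly positive random variable with $L(x):=1/\mathbb{P}(\sigma_0>x)$ slowly varying at infinity (i.e. $\lim_{u\to\infty}L(uv)/L(u)=1$ for every $v>0$), and let $Y=\{Y_n\}_{n\in\mathbb{N}}$ be i.i.d. with the law of $\sigma_0$. Let $h_t$ be any function with $h_t\to\infty$, $h_t^2=o(r_t)$, and such that, for all sufficiently large $t$, \[ L(\ell_t/h_t^3)>L(\ell_t)(1-1/h_t)\quad\text{and}\quad L(\ell_th_t^3)<L(\ell_t)(1+1/h_t).\] Then, as $t\to\infty$, \[ \mathbb{P}\Big(Y_{n_{\ell_t}}>\frac{th_t^2}{r_t}\Big)\to1.\]
   Context: $\ell_t:=\min\{s\ge0: sL(s)\ge t\}$ and $r_t:=L(\ell_t)$. For $n\ge0$, $M_n:=\max\{Y_i: i\le\lfloor n\rfloor\}$. For a level $l>0$, $n_l:=\min\{n\in\mathbb{N}: M_n>l\}$ is the index of the first exceedance of $l$. *)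

(* Defs.v *)
From HB Require Import structures.
From mathcomp Require Import all_boot all_order all_algebra.
From mathcomp Require Import all_classical all_reals all_analysis.
Set Implicit Arguments. Unset Strict Implicit. Unset Printing Implicit Defensive.
Import Order.TTheory GRing.Theory Num.Theory.
Import numFieldNormedType.Exports.
Local Open Scope classical_set_scope.
Local Open Scope ring_scope.

Section Defs.
Context {R : realType}.

Definition Ltail {d} {T : measurableType d} (P : probability T R)
  (X : {RV P >-> R}) (x : R) : R :=
  (fine (P [set w | x < X w]))^-1.

Definition slowly_varying (L : R -> R) : Prop :=
  forall v : R, 0 < v -> (fun u => L (u * v) / L u) @ +oo --> (1 : R).

(** ell_t := min { s >= 0 : s L(s) >= t } (written as an infimum; the set is
    an up-closed set whose infimum is attained). *)
Definition ell (L : R -> R) (t : R) : R :=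
  inf [set s : R | 0 <= s /\ t <= s * L s].

Definition littleo_pinfty (f g : R -> R) : Prop :=
  forall eps : R, 0 < eps -> \forall t \near +oo, `|f t| <= eps * `|g t|.

Definition rr (L : R -> R) (t : R) : R := L (ell L t).

Definition mutually_independent {d} {T : measurableType d}
  (P : probability T R) (Y : nat -> {RV P >-> R}) : Prop :=
  forall (I : seq nat) (B : nat -> set R),
    uniq I -> (forall i, measurable (B i)) ->
    P (\bigcap_(i in [set` I]) (Y i @^-1` B i)) =
      (\prod_(i <- I) P (Y i @^-1` B i))%E.

Definition Mmax {T : Type} (Y : nat -> T -> R) (n : nat) (w : T) : R :=
  \big[Order.max/Y 0%N w]_(i < n.+1) Y i w.

(** n_l(w) = n, i.e. n is the least index with M_n(w) > l. *)
Definition first_exceed {T : Type} (Y : nat -> T -> R) (l : R) (n : nat)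
  (w : T) : Prop :=
  l < Mmax Y n w /\ forall m : nat, (m < n)%N -> Mmax Y m w <= l.

Definition exceed_event {T : Type} (Y : nat -> T -> R) (l c : R) : set T :=
  [set w | exists n : nat, first_exceed Y l n w /\ c < Y n w].

End Defs.

(* Main.v *)
Set Warnings "-all".
Require Import Defs.
From HB Require Import structures.
From mathcomp Require Import all_boot all_order all_algebra.
From mathcomp Require Import all_classical all_reals all_analysis.
From mathcomp Require Import lra ring.
Import Order.TTheory GRing.Theory Num.Theory.
Import numFieldNormedType.Exports.
Local Open Scope classical_set_scope.
Local Open Scope ring_scope.

Section Aux0.
Context {R : realType} {d0 : measure_display} {T0 : measurableType d0}
  (P0 : probability T0 R) (sigma0 : {RV P0 >-> R}).

Lemma mes_gt (x : R) : measurable [set w | x < sigma0 w].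
Proof.
rewrite (_ : [set w | x < sigma0 w] = sigma0 @^-1` [set` `]x, +oo[]); last first.
  by apply/seteqP; split => w /=; rewrite in_itv /= andbT.
exact: measurable_funPTI (measurable_itv _).
Qed.

Lemma mes_le (x : R) : measurable [set w | sigma0 w <= x].
Proof.
rewrite (_ : [set w | sigma0 w <= x] = sigma0 @^-1` [set` `]-oo, x]]); last first.
  by apply/seteqP; split => w /=; rewrite in_itv /=.
exact: measurable_funPTI (measurable_itv _).
Qed.

Lemma PfinE [A : set T0] : measurable A -> P0 A = (fine (P0 A))%:E.
Proof. by move=> mA; rewrite fineK // (fin_num_measure P0 A mA). Qed.

Definition G (x : R) := fine (P0 [set w | x < sigma0 w]).

Lemma G_ge0 x : 0 <= G x.
Proof. exact/fine_ge0/measure_ge0. Qed.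

Lemma G_le1 x : G x <= 1.
Proof.
have := @probability_le1 _ _ _ P0 _ (mes_gt x).
by rewrite (PfinE (mes_gt x)) lee_fin.
Qed.

Lemma G_noninc x y : x <= y -> G y <= G x.
Proof.
move=> xy; rewrite /G; apply: fine_le; rewrite ?(fin_num_measure P0 _ (mes_gt _)) //.
apply: le_measure; rewrite ?inE; try exact: mes_gt.
by move=> w /=; apply: le_lt_trans.
Qed.

Lemma G_Q x : fine (P0 [set w | sigma0 w <= x]) + G x = 1.
Proof.
have := probability_setC P0 (mes_gt x).
rewrite (_ : ~` _ = [set w | sigma0 w <= x]); last first.
  by apply/seteqP; split => w /=; rewrite leNgt; move/negP.
rewrite (PfinE (mes_le x)) (PfinE (mes_gt x)) -EFinB => -[->].
by rewrite /= subrK.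
Qed.

Lemma G_gt0 : slowly_varying (Ltail sigma0) -> forall x, 0 < G x.
Proof.
move=> sv x; rewrite lt_neqAle G_ge0 andbT; apply/negP => /eqP G0.
have := sv 1 ltr01; move/cvgrPdist_lt => /(_ (1/2)) H.
have : \forall u \near (+oo : set_system R), False.
  near=> u.
  have Gu : G u = 0.
    apply/eqP; rewrite eq_le G_ge0 andbT G0 -/(G x); apply: G_noninc.
    near: u; apply: nbhs_pinfty_ge; exact: num_real.
  have : `|1 - Ltail sigma0 (u * 1) / Ltail sigma0 u| < 1/2.
    near: u. apply: H; lra.
  rewrite /Ltail mulr1 -!/(G u) Gu !invr0 mulr0 subr0 normr1; lra.
by move/filter_ex => [].
Unshelve. all: by end_near.
Qed.

End Aux0.
Section Aux1.
Context {R : realType} {T : Type} (Y : nat -> T -> R).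

Lemma big_foldr (s : seq nat) (x : R) w :
  \big[Order.max/x]_(i <- s) Y i w = foldr (fun i a => Order.max (Y i w) a) x s.
Proof. by elim: s => [|i s IH]; rewrite ?big_nil // big_cons IH. Qed.

Lemma foldr_le (s : seq nat) (x l : R) w :
  foldr (fun i a => Order.max (Y i w) a) x s <= l <->
  x <= l /\ (forall i, i \in s -> Y i w <= l).
Proof.
elim: s => [|j s IH] /=; first by split => // -[].
rewrite ge_max; split.
  move=> /andP[H1 /IH [H2 H3]]; split => // i; rewrite in_cons => /orP[/eqP -> //|].
  exact: H3.
move=> [H1 H2]; apply/andP; split; first by apply: H2; rewrite mem_head.
by apply/IH; split => // i iss; apply: H2; rewrite in_cons iss orbT.
Qed.

Lemma Mmax_le m w l : Mmax Y m w <= l <-> (forall i, (i <= m)%N -> Y i w <= l).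
Proof.
have -> : Mmax Y m w = \big[Order.max/Y 0%N w]_(0 <= i < m.+1) Y i w.
  by rewrite /Mmax; symmetry; apply: big_mkord.
rewrite /index_iota subn0 big_foldr foldr_le; split.
  by move=> [H1 H2] i im; apply: H2; rewrite mem_iota.
move=> H; split; first exact: H.
by move=> i; rewrite mem_iota => /andP[_]; rewrite add0n ltnS; apply: H.
Qed.

Lemma fe_iff l n w : first_exceed Y l n w <->
  (forall i, (i < n)%N -> Y i w <= l) /\ l < Y n w.
Proof.
split.
  move=> [H1 H2]; split.
    by move=> i ilt; move/Mmax_le: (H2 i ilt); apply.
  rewrite ltNge; apply/negP => Yn; move: H1; rewrite ltNge => /negP; apply.
  apply/Mmax_le => i; rewrite leq_eqVlt => /orP[/eqP -> //|ilt].
  by move/Mmax_le: (H2 i ilt); apply.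
move=> [H1 H2]; split.
  rewrite ltNge; apply/negP => /Mmax_le/(_ n (leqnn n)).
  by rewrite leNgt H2.
move=> m mn; apply/Mmax_le => i im; apply: H1.
exact: leq_ltn_trans im mn.
Qed.

Definition D (l b : R) (n : nat) : set T :=
  [set w | (forall i, (i < n)%N -> Y i w <= l) /\ b < Y n w].

Lemma exceed_eq l c : exceed_event Y l c = \bigcup_n D l (Num.max l c) n.
Proof.
apply/seteqP; split => w /=.
  move=> [n [/fe_iff [H1 H2] H3]]; exists n => //; split => //.
  by rewrite gt_max H2.
move=> [n _ [H1]]; rewrite gt_max => /andP[H2 H3].
by exists n; split => //; apply/fe_iff.
Qed.

Lemma D_sub l a b n : a <= b -> D l b n `<=` D l a n.
Proof. by move=> ab w [H1 H2]; split => //; apply: le_lt_trans H2. Qed.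

Lemma D_disj l b n m : l <= b -> (D l b n `&` D l b m !=set0) -> n = m.
Proof.
move=> lb [w [[H1 H2] [H3 H4]]].
case: (ltngtP n m) => // nm.
  by move: (H3 n nm); rewrite leNgt (le_lt_trans lb H2).
by move: (H1 m nm); rewrite leNgt (le_lt_trans lb H4).
Qed.

End Aux1.

Section Aux2.
Context {R : realType} {d0 : measure_display} {T0 : measurableType d0}
  (P0 : probability T0 R) (sigma0 : {RV P0 >-> R})
  {d : measure_display} {T : measurableType d} (P : probability T R)
  (Y : nat -> {RV P >-> R}).
Hypothesis law : forall n (B : set R), measurable B ->
  P (Y n @^-1` B) = P0 (sigma0 @^-1` B).
Hypothesis indep : mutually_independent Y.

Let Yf := fun n => (Y n : T -> R).

Definition Bs (l b : R) (n i : nat) : set R :=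
  if (i < n)%N then [set` `]-oo, l]] else [set` `]b, +oo[].

Lemma Bs_meas l b n i : measurable (Bs l b n i).
Proof. by rewrite /Bs; case: ifP => _; exact: measurable_itv. Qed.

Lemma D_cap l b n :
  D Yf l b n = \bigcap_(i in [set` iota 0 n.+1]) (Y i @^-1` Bs l b n i).
Proof.
apply/seteqP; split => w.
  move=> [H1 H2] i Hi; have {Hi} : i \in iota 0 n.+1 by [].
  rewrite mem_iota add0n ltnS => /andP[_ ilen].
  rewrite /Bs /=; case: ltnP => [ilt|nle]; rewrite /= in_itv /= ?andbT.
    exact: H1.
  by have -> : i = n by apply/eqP; rewrite eqn_leq ilen.
move=> H; split.
  move=> i ilt; have Hm : i \in iota 0 n.+1 by rewrite mem_iota add0n ltnS (ltnW ilt).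
  by have := H i Hm; rewrite /Bs ilt /= in_itv /=.
have Hm : n \in iota 0 n.+1 by rewrite mem_iota add0n ltnS leqnn.
by have := H n Hm; rewrite /Bs ltnn /= in_itv /= andbT.
Qed.

Lemma D_meas l b n : measurable (D Yf l b n).
Proof.
rewrite D_cap; apply: bigcap_measurableType => i _.
exact: measurable_funPTI (Bs_meas _ _ _ _).
Qed.

Lemma PD l b n : P (D Yf l b n) =
  ((fine (P0 [set w | sigma0 w <= l]))^+n * fine (P0 [set w | b < sigma0 w]))%:E.
Proof.
rewrite D_cap indep ?iota_uniq //; last by move=> i; exact: Bs_meas.
rewrite -addn1 iotaD big_cat /= big_cons big_nil mule1 add0n.
rewrite law; last exact: Bs_meas.
rewrite /Bs ltnn.
have -> : sigma0 @^-1` [set` `]b, +oo[] = [set w | b < sigma0 w].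
  by apply/seteqP; split => w /=; rewrite in_itv /= andbT.
rewrite (eq_big_seq (fun _ => P0 [set w | sigma0 w <= l])); last first.
  move=> i; rewrite mem_iota add0n => /andP[_ ->]; rewrite law; last exact: measurable_itv.
  by congr (P0 _); apply/seteqP; split => w /=; rewrite in_itv.
rewrite (PfinE P0 (mes_le P0 sigma0 l)) (PfinE P0 (mes_gt P0 sigma0 b)).
rewrite prodEFin -EFinM; congr (_%:E); congr (_ * _).
by have := prodr_const_nat 0 n (fine (P0 [set w | sigma0 w <= l])); rewrite /index_iota subn0.
Qed.

Lemma Punion l a N : l <= a ->
  P (\big[setU/set0]_(i < N) D Yf l a i) = \sum_(i < N) P (D Yf l a i).
Proof.
move=> la.
have := measure_bigsetU_ord P xpredT (F := fun i : 'I_N => D Yf l a i).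
apply.
  by move=> i; exact: D_meas.
by move=> i j _ _ H; apply: val_inj; exact: (D_disj Yf _ _ _ _ la H).
Qed.

End Aux2.
Section Real.
Context {R : realType}.

Lemma geo_sum (q g : R) N : q + g = 1 -> \sum_(i < N) q ^+ i * g = 1 - q ^+ N.
Proof.
move=> qg; have -> : g = 1 - q by rewrite -qg addrC addKr.
elim: N => [|N IH]; first by rewrite big_ord0 expr0 subrr.
by rewrite big_ord_recr /= IH exprS; ring.
Qed.

Lemma ge_lim (y q : R) : 0 <= q -> q < 1 -> (forall N, 1 - q ^+ N <= y) -> 1 <= y.
Proof.
move=> q0 q1 H; rewrite leNgt; apply/negP => y1.
have := @cvg_expr R q; rewrite ger0_norm // => /(_ q1).
move/cvgrPdist_lt => /(_ (1 - y)); rewrite subr_gt0 => /(_ y1) HN.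
have [N] := filter_ex HN.
rewrite sub0r normrN ger0_norm ?exprn_ge0 // => HqN.
by have := H N; lra.
Qed.

Lemma ell_main (L : R -> R) t hv :
  (forall x, 1 <= L x) -> (forall x y, x <= y -> L x <= L y) -> 0 < t -> 4 <= hv ->
  L (ell L t * hv ^+ 3) < L (ell L t) * (1 + hv^-1) ->
  0 < ell L t /\ t <= 4 * ell L t * L (ell L t).
Proof.
move=> L1 Lmono t0 h4 Hlt.
set S := [set s | 0 <= s /\ t <= s * L s].
have S0 : S !=set0.
  exists t; split; first exact: ltW.
  by rewrite -{1}(mulr1 t) ler_wpM2l // ltW.
have lbS : lbound S 0 by move=> s [].
have ell0 : 0 <= ell L t by apply: lb_le_inf.
have ellpos : 0 < ell L t.
  rewrite lt_neqAle ell0 andbT; apply/negP => /eqP e0.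
  have L1p : 0 < L 1 by apply: lt_le_trans (L1 1); lra.
  set e := Num.min 1 (t / (2 * L 1)).
  have epos : 0 < e by rewrite lt_min ltr01 /= divr_gt0 // mulr_gt0.
  have infS : inf S < e by have : ell L t = inf S by []; lra.
  have [s [s0 Hs] slt] := @inf_lt R S e S0 infS.
  have s1 : s <= 1 by apply: ltW; apply: (lt_le_trans slt); rewrite ge_min lexx.
  have se : s <= t / (2 * L 1) by apply: ltW; apply: (lt_le_trans slt); rewrite ge_min lexx orbT.
  have : s * L s <= s * L 1 by rewrite ler_wpM2l // Lmono.
  have : s * L 1 <= t / (2 * L 1) * L 1 by rewrite ler_wpM2r // ltW.
  have -> : t / (2 * L 1) * L 1 = t / 2.
    by field; rewrite gt_eqF.
  lra.
split => //.
have [s [s0 Hs] slt] : exists2 s, S s & s < 2 * ell L t.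
  by apply: inf_lt => //; have : ell L t = inf S by []; lra.
have h3 : 2 <= hv ^+ 3 by rewrite !exprS expr0 mulr1; nra.
set l := ell L t in ellpos slt h3 Hlt *.
have A1 : s * L s <= (2 * l) * L (2 * l).
  by apply: ler_pM => //; [apply: le_trans (L1 s); lra | apply: ltW | apply: Lmono; apply: ltW].
have A2 : L (2 * l) <= L (l * hv ^+ 3) by apply: Lmono; nra.
have hinv1 : hv^-1 <= 1 by rewrite invf_le1; lra.
have hinv0 : 0 <= hv^-1 by rewrite invr_ge0; lra.
have r1 := L1 l.
have A3 : L (l * hv ^+ 3) <= 2 * L l by nra.
have A4 : (2 * l) * L (2 * l) <= (2 * l) * (2 * L l).
  by apply: ler_wpM2l; [lra | apply: le_trans A3].
lra.
Qed.

End Real.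

Theorem proposition3p7 (R : realType)
  (d0 : measure_display) (T0 : measurableType d0) (P0 : probability T0 R)
  (sigma0 : {RV P0 >-> R})
  (d : measure_display) (T : measurableType d) (P : probability T R)
  (Y : nat -> {RV P >-> R}) (h : R -> R) :
  P0 [set w | sigma0 w <= 0] = 0%E ->
  slowly_varying (Ltail sigma0) ->
  (forall n (B : set R), measurable B ->
     P (Y n @^-1` B) = P0 (sigma0 @^-1` B)) ->
  mutually_independent Y ->
  h @ +oo --> +oo ->
  littleo_pinfty (fun t => h t ^+ 2) (rr (Ltail sigma0)) ->
  (\forall t \near +oo,
     Ltail sigma0 (ell (Ltail sigma0) t / h t ^+ 3)
       > Ltail sigma0 (ell (Ltail sigma0) t) * (1 - (h t)^-1)
   /\ Ltail sigma0 (ell (Ltail sigma0) t * h t ^+ 3)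
       < Ltail sigma0 (ell (Ltail sigma0) t) * (1 + (h t)^-1)) ->
  P (exceed_event (fun n => Y n) (ell (Ltail sigma0) t0) (t0 * h t0 ^+ 2 / rr (Ltail sigma0) t0)) @[t0 --> +oo] --> 1%E.
Proof.
move=> _ sv law indep hinf _ Hev.
set L := Ltail sigma0 in Hev *.
have Gp := G_gt0 P0 sigma0 sv.
have LE x : L x = (G P0 sigma0 x)^-1 by [].
have L1 x : 1 <= L x.
  by rewrite LE invf_ge1 ?Gp // G_le1.
have Lmono x y : x <= y -> L x <= L y.
  move=> xy; rewrite !LE lef_pV2 ?posrE ?Gp //; exact: G_noninc.
set E := fun t0 => exceed_event (fun n => Y n) (ell L t0) (t0 * h t0 ^+ 2 / rr L t0).
have Emeas t0 : measurable (E t0).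
  rewrite /E exceed_eq; apply: bigcupT_measurable => n; exact: D_meas.
have key : \forall t0 \near +oo, 1 <= fine (P (E t0)) * (1 + (h t0)^-1).
  have h4 : \forall t0 \near +oo, 4 <= h t0 by move/cvgryPge : hinf; apply.
  have t0p : \forall t0 \near (+oo : set_system R), 0 < t0.
    by apply: nbhs_pinfty_gt; exact: num_real.
  near=> t0.
  have H4 : 4 <= h t0 by near: t0.
  have tp : 0 < t0 by near: t0.
  have Hlt : L (ell L t0 * h t0 ^+ 3) < L (ell L t0) * (1 + (h t0)^-1).
    by near: t0; apply: filterS Hev => t [].
  have [lpos tle] := ell_main _ _ _ L1 Lmono tp H4 Hlt.
  set l := ell L t0 in Hlt lpos tle *.
  set hv := h t0 in H4 Hlt tle *.
  have rE : rr L t0 = L l by [].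
  set a := l * hv ^+ 3 in Hlt *.
  have h3 : 64 <= hv ^+ 3 by rewrite !exprS expr0 mulr1; nra.
  have r1 := L1 l.
  have la : Num.max l (t0 * hv ^+ 2 / rr L t0) <= a.
    rewrite ge_max; apply/andP; split; first by rewrite /a; nra.
    rewrite rE ler_pdivrMr; last by lra.
    rewrite /a; have -> : hv ^+ 3 = hv * hv ^+ 2 by rewrite !exprS.
    have X0 : 0 <= hv ^+ 2 by rewrite exprn_ge0 //; lra.
    have e1 : t0 * hv ^+ 2 <= 4 * l * L l * hv ^+ 2 by rewrite ler_wpM2r.
    have e2 : 4 * (l * L l * hv ^+ 2) <= hv * (l * L l * hv ^+ 2).
      by rewrite ler_wpM2r // !mulr_ge0 //; lra.
    lra.
  have la' : l <= a by apply: le_trans la; rewrite le_max lexx.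
  set q := fine (P0 [set w | sigma0 w <= l]).
  have qg : q + G P0 sigma0 l = 1 := G_Q P0 sigma0 l.
  have gl0 := Gp l; have ga0 := Gp a.
  set gl := G P0 sigma0 l in qg gl0 *; set ga := G P0 sigma0 a in ga0 *.
  have kpos : 0 < 1 + hv^-1 by rewrite ltr_wpDr // invr_ge0; lra.
  have k_ga : gl <= ga * (1 + hv^-1).
    move: Hlt; rewrite !LE -/gl -/ga => Hlt.
    have : gl * ga * ga^-1 < gl * ga * (gl^-1 * (1 + hv^-1)).
      by rewrite ltr_pM2l // mulr_gt0.
    have -> : gl * ga * ga^-1 = gl by rewrite mulfK // gt_eqF.
    have -> : gl * ga * (gl^-1 * (1 + hv^-1)) = ga * (1 + hv^-1).
      by rewrite mulrAC mulrA mulfV ?gt_eqF // mul1r mulrC.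
    exact: ltW.
  have sumN N : \sum_(i < N) q ^+ i * ga <= fine (P (E t0)).
    have sub : \big[setU/set0]_(i < N) D (fun n => Y n : T -> R) l a i `<=` E t0.
      rewrite /E exceed_eq -bigcup_mkord => w [i _ Hw]; exists i => //.
      exact: D_sub Hw.
    have := le_measure P _ _ sub.
    rewrite inE => /(_ (bigsetU_measurable _ _)) => /(_ (fun i _ => D_meas _ _ _ _ _)).
    rewrite inE => /(_ (Emeas t0)).
    move=> H.
    have H3 : (\sum_(i < N) P (D (fun n => Y n : T -> R) l a i) <= P (E t0))%E.
      by rewrite -(Punion P Y l a N la'); exact: H.
    move: H3.
    under eq_bigr => i _ do rewrite (PD _ _ _ _ law indep).
    by rewrite sumEFin (PfinE P (Emeas t0)) lee_fin.
  apply: (@ge_lim _ _ q).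
  - exact/fine_ge0/measure_ge0.
  - lra.
  move=> N; rewrite -(geo_sum _ _ N qg).
  apply: le_trans (ler_wpM2r (ltW kpos) (sumN N)).
  rewrite mulr_suml; apply: ler_sum => i _; rewrite -mulrA ler_wpM2l //.
  exact/exprn_ge0/fine_ge0/measure_ge0.
apply: cvg_EFin.
  by near=> t0; rewrite (fin_num_measure P _ (Emeas t0)).
apply/cvgrPdist_le => eps eps0.
have hb : \forall t0 \near +oo, eps^-1 <= h t0 by move/cvgryPge : hinf; apply.
near=> t0.
have K : 1 <= fine (P (E t0)) * (1 + (h t0)^-1) by near: t0.
have hb' : eps^-1 <= h t0 by near: t0.
have hpos : 0 < h t0 by apply: lt_le_trans hb'; rewrite invr_gt0.
have hie : (h t0)^-1 <= eps.
  by rewrite -(invrK eps) lef_pV2 ?posrE ?invr_gt0.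
have hi0 : 0 <= (h t0)^-1 by rewrite invr_ge0 ltW.
have x1 : fine (P (E t0)) <= 1.
  have := @probability_le1 _ _ _ P _ (Emeas t0).
  by rewrite (PfinE P (Emeas t0)) lee_fin.
rewrite /= -/(E t0) ger0_norm; last by rewrite subr_ge0.
nra.
Unshelve. all: by end_near.
Qed.
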